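(* Let $d\ge1$ and $K^\infty(t)=\frac{1}{2\pi}\,t\,(\pi-\arccos t)$ for $t\in[-1,1]$. For every spherical harmonic $Y$ on $\mathbb{S}^d$ of odd degree $k\ge3$, $$\int_{\mathbb{S}^d}K^\infty(\mathbf{u}^T\mathbf{v})\,Y(\mathbf{v})\,d\mathbf{v}=0\quad\text{for all }\mathbf{u}\in\mathbb{S}^d,$$ i.e. the eigenvalues of convolution with $K^\infty$ corresponding to odd harmonics of degree $k\ge3$ vanish.
   Context: $\mathbb{S}^d$ is the unit sphere in $\mathbb{R}^{d+1}$ with surface measure $d\mathbf{v}$. A spherical harmonic of degree $k$ is the restriction to $\mathbb{S}^d$ of a homogeneous harmonic polynomial of degree $k$ on $\mathbb{R}^{d+1}$. Note $K^\infty(\mathbf{x}^T\mathbf{y})$ is proportional to $\mathbb{E}_{\mathbf{w}}[\mathbb{1}\{\mathbf{w}^T\mathbf{x}>0\}\mathbb{1}\{\mathbf{w}^T\mathbf{y}>0\}]\,\mathbf{x}^T\mathbf{y}$ for $\mathbf{w}$ Gaussian (equivalently uniform on the sphere). *)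

(* Defs.v *)
From Stdlib Require Import Reals Lra ClassicalEpsilon.
Open Scope R_scope.

(* Vectors of R^{d+1}: functions nat -> R, coordinates 0..d are used. *)
Definition dot (d : nat) (u v : nat -> R) : R := sum_f_R0 (fun i => u i * v i) d.

Definition epsilon_inh {A : Type} (h : inhabited A) : A :=
  let (x, _) := constructive_indefinite_description (fun _ : A => True)
                  (match h with inhabits a => ex_intro _ a I end) in x.

(* Totalised Riemann integral (value 0 if not Riemann integrable). *)
Definition Rint (f : R -> R) (a b : R) : R :=
  match excluded_middle_informative (inhabited (Riemann_integrable f a b)) with
  | left h => RiemannInt (epsilon_inh h)
  | right _ => 0
  end.


Definition cons_vec (x0 : R) (w : nat -> R) : nat -> R :=
  fun i => match i with O => x0 | S j => w j end.

(* Integral w.r.t. the surface measure of S^d ⊂ R^{d+1}, via spherical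
   coordinates: x = (cos θ, sin θ · w), w ∈ S^{d-1}, dσ_d = sin^{d-1} θ dθ dσ_{d-1};
   S^0 = {±1} with counting measure. *)
Fixpoint sphere_int (d : nat) (f : (nat -> R) -> R) : R :=
  match d with
  | O => f (cons_vec 1 (fun _ => 0)) + f (cons_vec (-1) (fun _ => 0))
  | S d' => Rint (fun th => sin th ^ d' *
                  sphere_int d' (fun w => f (cons_vec (cos th) (fun i => sin th * w i))))
                 0 PI
  end.

(* Polynomials in the variables x_0..x_d: finite lists of monomials (coeff, exponents). *)
Definition mpoly := list (R * (nat -> nat)).

Fixpoint prod_upto (g : nat -> R) (n : nat) : R :=
  match n with O => g O | S m => prod_upto g m * g (S m) end.

Fixpoint deg_upto (a : nat -> nat) (n : nat) : nat :=
  match n with O => a O | S m => (deg_upto a m + a (S m))%nat end.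

Definition mono_eval (d : nat) (m : R * (nat -> nat)) (x : nat -> R) : R :=
  fst m * prod_upto (fun i => x i ^ (snd m i)) d.

Definition peval (d : nat) (p : mpoly) (x : nat -> R) : R :=
  List.fold_right (fun m acc => mono_eval d m x + acc) 0 p.

Definition homogeneous (d k : nat) (p : mpoly) : Prop :=
  List.Forall (fun m => deg_upto (snd m) d = k) p.

(* Formal second partial derivative in x_i. *)
Definition d2_mono (i : nat) (m : R * (nat -> nat)) : R * (nat -> nat) :=
  (fst m * INR (snd m i) * INR (snd m i - 1),
   fun j => if Nat.eqb j i then (snd m j - 2)%nat else snd m j).

Definition laplacian (d : nat) (p : mpoly) : mpoly :=
  List.flat_map (fun i => List.map (d2_mono i) p) (List.seq 0 (S d)).

Definition harmonic (d : nat) (p : mpoly) : Prop :=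
  forall x, peval d (laplacian d p) x = 0.

Definition Kinf (t : R) : R := / (2 * PI) * t * (PI - acos t).

(* Main.v *)
Require Import Defs.
From Stdlib Require Import Reals Lra Lia FunctionalExtensionality List ClassicalEpsilon.
From Coquelicot Require Import Coquelicot.
Open Scope R_scope.

Lemma Rint_int f a b : Riemann_integrable f a b -> Rint f a b = RInt f a b.
Proof.
  intros pr. unfold Rint. destruct excluded_middle_informative as [h|h].
  - rewrite (RInt_Reals f a b (epsilon_inh h)). reflexivity.
  - exfalso; apply h; exact (inhabits pr).
Qed.

Lemma Rint_nint f a b : (Riemann_integrable f a b -> False) -> Rint f a b = 0.
Proof.
  intros n. unfold Rint. destruct excluded_middle_informative as [h|h]; auto.
  exfalso. destruct h as [pr]. exact (n pr).
Qed.

Lemma RInt_scalR (f : R -> R) a b c : ex_RInt f a b -> RInt (fun x => c * f x) a b = c * RInt f a b.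
Proof. intros H. exact (RInt_scal (V:=R_CompleteNormedModule) f a b c H). Qed.

Lemma ex_RInt_scalR (f : R -> R) a b c : ex_RInt f a b -> ex_RInt (fun x => c * f x) a b.
Proof. intros H. exact (ex_RInt_scal (V:=R_NormedModule) f a b c H). Qed.

Lemma ex_RInt_extR (f g : R -> R) a b : (forall x, f x = g x) -> ex_RInt f a b -> ex_RInt g a b.
Proof. intros H. apply (ex_RInt_ext (V:=R_NormedModule)). intros; apply H. Qed.

Lemma ex_RInt_constR a b (c : R) : ex_RInt (fun _ => c) a b.
Proof. exact (ex_RInt_const (V:=R_NormedModule) a b c). Qed.

Lemma Rint_scal f a b c : Rint (fun x => c * f x) a b = c * Rint f a b.
Proof.
  destruct (Req_dec c 0) as [->|hc].
  - assert (Riemann_integrable (fun x => 0 * f x) a b) as pr.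
    { apply ex_RInt_Reals_0. apply (ex_RInt_extR (fun _ => 0)).
      intros x. symmetry; apply Rmult_0_l. apply ex_RInt_constR. }
    rewrite (Rint_int _ _ _ pr).
    rewrite (RInt_ext (V:=R_CompleteNormedModule) (fun x => 0 * f x) (fun x => 0 * (fun _ => 0) x)).
    2:{ intros; rewrite !Rmult_0_l; reflexivity. }
    rewrite (RInt_scalR (fun _ => 0) a b 0) by apply ex_RInt_constR. ring.
  - destruct (excluded_middle_informative (inhabited (Riemann_integrable f a b))) as [[pr]|npr].
    + rewrite (Rint_int f _ _ pr).
      assert (e : ex_RInt f a b) by exact (ex_RInt_Reals_1 _ _ _ pr).
      rewrite (Rint_int _ _ _ (ex_RInt_Reals_0 _ _ _ (ex_RInt_scalR f a b c e))).
      now apply RInt_scalR.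
    + rewrite (Rint_nint f) by (intro pr; exact (npr (inhabits pr))). rewrite Rint_nint. ring.
      intros pr. apply npr. constructor. apply ex_RInt_Reals_0.
      apply (ex_RInt_extR (fun x => (/c) * (c * f x))).
      intros x. field. exact hc.
      apply ex_RInt_scalR. now apply ex_RInt_Reals_1.
Qed.

Lemma cont_eps (f : R -> R) x : continuous f x -> forall eps, 0 < eps -> exists del, 0 < del /\
   forall y, Rabs (y - x) < del -> Rabs (f y - f x) < eps.
Proof.
  intros H eps he.
  destruct (proj1 (filterlim_locally f (f x)) H (mkposreal eps he)) as [del hd].
  exists del. split. apply cond_pos. intros y hy. apply (hd y). exact hy.
Qed.

Lemma eps_cont (f : R -> R) x : (forall eps, 0 < eps -> exists del, 0 < del /\
   forall y, Rabs (y - x) < del -> Rabs (f y - f x) < eps) -> continuous f x.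
Proof.
  intros H. apply filterlim_locally. intros eps.
  destruct (H eps (cond_pos eps)) as [del [hd hy]].
  exists (mkposreal del hd). intros y hb. apply hy. exact hb.
Qed.

Lemma cont_pt (f : R -> R) x : continuous f x -> continuity_pt f x.
Proof. intros; now apply continuity_pt_filterlim. Qed.

Lemma cont_int (f : R -> R) a b : a <= b -> (forall x, continuous f x) -> Riemann_integrable f a b.
Proof.
  intros hab hc. apply continuity_implies_RiemannInt; auto. intros; apply cont_pt; auto.
Qed.

Lemma cont_exRInt (f : R -> R) a b : a <= b -> (forall x, continuous f x) -> ex_RInt f a b.
Proof. intros; apply ex_RInt_Reals_1; now apply cont_int. Qed.

Lemma Rint_cont (f : R -> R) a b : a <= b -> (forall x, continuous f x) -> Rint f a b = RInt f a b.
Proof. intros. apply Rint_int. now apply cont_int. Qed.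

Lemma cont_mult (f g : R -> R) x : continuous f x -> continuous g x -> continuous (fun y => f y * g y) x.
Proof. exact (continuous_mult (K:=R_AbsRing) f g x). Qed.
Lemma cont_plus (f g : R -> R) x : continuous f x -> continuous g x -> continuous (fun y => f y + g y) x.
Proof. exact (continuous_plus (V:=R_NormedModule) f g x). Qed.
Lemma cont_const (c : R) x : continuous (fun _ : R => c) x.
Proof. exact (continuous_const (U:=R_UniformSpace) (V:=R_UniformSpace) c x). Qed.
Lemma cont_id x : continuous (fun y : R => y) x.
Proof. exact (continuous_id (U:=R_UniformSpace) x). Qed.
Lemma cont_pow (f : R -> R) n x : continuous f x -> continuous (fun y => f y ^ n) x.
Proof.
  intros H; induction n as [|n IH]; simpl. apply cont_const. now apply cont_mult.
Qed.
Lemma cont_cos x : continuous cos x. Proof. apply continuous_cos. Qed.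
Lemma cont_sin x : continuous sin x. Proof. apply continuous_sin. Qed.

Lemma cs_cont a b x : continuous (fun t => cos t ^ a * sin t ^ b) x.
Proof. apply cont_mult; apply cont_pow; [apply cont_cos|apply cont_sin]. Qed.

Definition W a b := Rint (fun t => cos t ^ a * sin t ^ b) 0 PI.
Definition IW a b := RInt (fun t => cos t ^ a * sin t ^ b) 0 PI.

Lemma PI_ge0 : 0 <= PI. Proof. generalize PI_RGT_0; lra. Qed.

Lemma W_IW a b : W a b = IW a b.
Proof. apply Rint_cont. apply PI_ge0. intros; apply cs_cont. Qed.

Lemma ex_cs a b : ex_RInt (fun t => cos t ^ a * sin t ^ b) 0 PI.
Proof. apply cont_exRInt. apply PI_ge0. intros; apply cs_cont. Qed.

Lemma der_cs a b x : is_derive (fun t => cos t ^ S a * sin t ^ S b) x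
   (- (INR a + 1) * (cos x ^ a * sin x ^ (b + 2)) + (INR b + 1) * (cos x ^ (a+2) * sin x ^ b)).
Proof.
  auto_derive; auto.
  rewrite !pow_add. destruct a; destruct b; simpl; ring.
Qed.

Lemma RInt_plusR (f g : R -> R) a b : ex_RInt f a b -> ex_RInt g a b ->
  RInt (fun x => f x + g x) a b = RInt f a b + RInt g a b.
Proof. intros. exact (RInt_plus (V:=R_CompleteNormedModule) f g a b H H0). Qed.

Lemma RInt_extR (f g : R -> R) a b : (forall x, f x = g x) -> RInt f a b = RInt g a b.
Proof. intros H. apply (RInt_ext (V:=R_CompleteNormedModule)). intros; apply H. Qed.

Lemma RInt_der0 (f df : R -> R) : (forall x, is_derive f x (df x)) -> (forall x, continuous df x) ->
  f PI = f 0 -> RInt df 0 PI = 0.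
Proof.
  intros hd hc he.
  assert (H := is_RInt_derive (V:=R_CompleteNormedModule) f df 0 PI (fun x _ => hd x) (fun x _ => hc x)).
  apply is_RInt_unique in H. rewrite H. rewrite he. unfold minus, plus, opp; simpl. ring.
Qed.

Lemma IW_ibp a b : (INR a + 1) * IW a (b+2) = (INR b + 1) * IW (a+2) b.
Proof.
  assert (H := RInt_der0 _ _ (der_cs a b)).
  assert (H1 : forall x, continuous (fun x0 =>
     - (INR a + 1) * (cos x0 ^ a * sin x0 ^ (b + 2)) +
     (INR b + 1) * (cos x0 ^ (a + 2) * sin x0 ^ b)) x).
  { intros x. apply cont_plus; apply cont_mult; try apply cont_const; apply cs_cont. }
  specialize (H H1). clear H1.
  assert (H2 : cos PI ^ S a * sin PI ^ S b = cos 0 ^ S a * sin 0 ^ S b).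
  { simpl. rewrite sin_PI, sin_0. ring. }
  specialize (H H2). clear H2.
  rewrite RInt_plusR in H by (apply ex_RInt_scalR, ex_cs).
  rewrite !RInt_scalR in H by apply ex_cs. unfold IW. lra.
Qed.

Lemma IW_sum a b : IW a b = IW (a+2) b + IW a (b+2).
Proof.
  unfold IW. rewrite <- RInt_plusR by apply ex_cs. apply RInt_extR. intros x.
  rewrite !pow_add. pose proof (sin2_cos2 x). unfold Rsqr in H. simpl.
  transitivity (cos x ^ a * sin x ^ b * (sin x * sin x + cos x * cos x)).
  rewrite H; ring. ring.
Qed.

Lemma W1 a b : W (a+2) b * (INR a + INR b + 2) = (INR a + 1) * W a b.
Proof. rewrite !W_IW, (IW_sum a b).
  transitivity ((INR a+1)*IW (a+2) b + (INR b + 1) * IW (a+2) b). ring. rewrite <- IW_ibp. ring. Qed.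

Lemma W2 a b : W a (b+2) * (INR a + INR b + 2) = (INR b + 1) * W a b.
Proof. rewrite !W_IW, (IW_sum a b).
  transitivity ((INR a+1)*IW a (b+2) + (INR b + 1) * IW a (b+2)). ring. rewrite IW_ibp. ring. Qed.

Lemma W3 b : W 1 b = 0.
Proof.
  rewrite W_IW. unfold IW.
  assert (H : RInt (fun t => (INR b + 1) * (cos t ^ 1 * sin t ^ b)) 0 PI = 0).
  { apply (RInt_der0 (fun t => sin t ^ S b)).
    - intros x. auto_derive; auto. destruct b; simpl; ring.
    - intros; apply cont_mult. apply cont_const. apply cs_cont.
    - rewrite sin_PI, sin_0; reflexivity. }
  rewrite RInt_scalR in H by apply ex_cs.
  assert (0 < INR b + 1) by (pose proof (pos_INR b); lra).
  nra.
Qed.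

Lemma S_scal d : forall f c, sphere_int d (fun v => c * f v) = c * sphere_int d f.
Proof.
  induction d as [|d IH]; intros f c; simpl. ring.
  rewrite <- Rint_scal. f_equal. apply functional_extensionality. intros th.
  rewrite IH. ring.
Qed.

Lemma S_zero d : sphere_int d (fun _ => 0) = 0.
Proof.
  replace (fun _ : nat -> R => 0) with (fun v : nat -> R => 0 * 0).
  rewrite (S_scal d (fun _ => 0) 0). ring.
  apply functional_extensionality; intros; ring.
Qed.

Definition P d (b : nat -> nat) (v : nat -> R) := prod_upto (fun i => v i ^ b i) d.
Definition M d b := sphere_int d (P d b).
Definition modx (a : nat -> nat) (i : nat) (f : nat -> nat) : nat -> nat :=
  fun l => if Nat.eqb l i then f (a l) else a l.
Definition tl (a : nat -> nat) := fun j => a (S j).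

Lemma prod_upto_S0 g n : prod_upto g (S n) = g 0%nat * prod_upto (fun j => g (S j)) n.
Proof.
  induction n as [|n IH]. simpl. ring.
  change (prod_upto g (S (S n))) with (prod_upto g (S n) * g (S (S n))).
  rewrite IH. simpl. ring.
Qed.

Lemma deg_upto_S0 a n : deg_upto a (S n) = (a 0%nat + deg_upto (fun j => a (S j)) n)%nat.
Proof.
  induction n as [|n IH]. simpl. lia.
  change (deg_upto a (S (S n))) with (deg_upto a (S n) + a (S (S n)))%nat.
  rewrite IH. simpl. lia.
Qed.

Lemma prod_upto_scale s w a n :
  prod_upto (fun j => (s * w j) ^ a j) n = s ^ deg_upto a n * prod_upto (fun j => w j ^ a j) n.
Proof.
  induction n as [|n IH]; simpl. apply Rpow_mult_distr.
  rewrite IH, Rpow_mult_distr, pow_add. ring.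
Qed.

Lemma prod_upto_ext g h n : (forall j, (j <= n)%nat -> g j = h j) -> prod_upto g n = prod_upto h n.
Proof.
  induction n as [|n IH]; intros H; simpl. apply H; lia.
  rewrite IH by (intros; apply H; lia). rewrite (H (S n)) by lia. reflexivity.
Qed.

Lemma deg_upto_ext g h n : (forall j, (j <= n)%nat -> g j = h j) -> deg_upto g n = deg_upto h n.
Proof.
  induction n as [|n IH]; intros H; simpl. apply H; lia.
  rewrite IH by (intros; apply H; lia). rewrite (H (S n)) by lia. reflexivity.
Qed.

Lemma M0 b : M 0 b = 1 ^ b 0%nat + (-1) ^ b 0%nat.
Proof. reflexivity. Qed.

Lemma MS d b : M (S d) b = W (b 0%nat) (deg_upto (tl b) d + d) * M d (tl b).
Proof.
  unfold M at 1. simpl.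
  replace (fun th : R => sin th ^ d * sphere_int d
     (fun w => P (S d) b (cons_vec (cos th) (fun i => sin th * w i))))
   with (fun th : R => M d (tl b) * (cos th ^ b 0%nat * sin th ^ (deg_upto (tl b) d + d))).
  rewrite Rint_scal. unfold W. ring.
  apply functional_extensionality; intros th.
  replace (fun w => P (S d) b (cons_vec (cos th) (fun i => sin th * w i)))
    with (fun w => (cos th ^ b 0%nat * sin th ^ deg_upto (tl b) d) * P d (tl b) w).
  rewrite S_scal. unfold M. rewrite pow_add. ring.
  apply functional_extensionality; intros w. unfold P.
  rewrite prod_upto_S0. simpl cons_vec. rewrite prod_upto_scale. unfold tl. ring.
Qed.

Lemma deg_modx a i f n : (i <= n)%nat ->
  (deg_upto (modx a i f) n + a i = deg_upto a n + f (a i))%nat.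
Proof.
  induction n as [|n IH]; intros hi; simpl.
  - assert (i = 0%nat) by lia. subst. unfold modx. simpl. lia.
  - unfold modx at 2. destruct (Nat.eqb (S n) i) eqn:E.
    + apply Nat.eqb_eq in E. subst.
      rewrite (deg_upto_ext (modx a (S n) f) a n). lia.
      intros j hj. unfold modx. destruct (Nat.eqb j (S n)) eqn:E2; auto.
      apply Nat.eqb_eq in E2; lia.
    + apply Nat.eqb_neq in E. specialize (IH ltac:(lia)). lia.
Qed.

Lemma tl_modxS a i f : tl (modx a (S i) f) = modx (tl a) i f.
Proof. reflexivity. Qed.
Lemma tl_modx0 a f : tl (modx a 0 f) = tl a.
Proof. reflexivity. Qed.

Lemma MI d : forall b i, (i <= d)%nat ->
  (INR (deg_upto b d) + INR d) * M d (modx b i S) = INR (b i) * M d (modx b i pred).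
Proof.
  induction d as [|d IH]; intros b i hi.
  - assert (i = 0%nat) by lia. subst. rewrite !M0. unfold modx. simpl.
    destruct (b 0%nat) as [|c]; simpl. ring. rewrite !pow1. ring.
  - rewrite !MS. destruct i as [|i].
    + rewrite !tl_modx0. change (modx b 0 S 0%nat) with (S (b 0%nat)).
      change (modx b 0 pred 0%nat) with (pred (b 0%nat)).
      change (modx b 0 S 0%nat) with (S (b 0%nat)).
      rewrite deg_upto_S0. fold (tl b).
      set (dt := deg_upto (tl b) d). set (Mp := M d (tl b)).
      destruct (b 0%nat) as [|c].
      * simpl. rewrite W3. ring.
      * simpl pred. pose proof (W1 c (dt + d)) as H.
        replace (S (S c)) with (c + 2)%nat by lia.
        rewrite plus_INR in H.
        transitivity (W (c + 2) (dt + d) * (INR c + (INR dt + INR d) + 2) * Mp).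
        { rewrite plus_INR, !S_INR. ring. }
        rewrite H. rewrite S_INR. ring.
    + rewrite !tl_modxS. change (modx b (S i) S 0%nat) with (b 0%nat).
      change (modx b (S i) pred 0%nat) with (b 0%nat).
      change (modx b (S i) S (S i)) with (S (b (S i))).
      assert (IHi := IH (tl b) i ltac:(lia)).
      pose proof (deg_modx (tl b) i S d ltac:(lia)) as Hu.
      pose proof (deg_modx (tl b) i pred d ltac:(lia)) as Hd.
      change (b (S i)) with (tl b i).
      rewrite deg_upto_S0. fold (tl b).
      set (dt := deg_upto (tl b) d) in *.
      destruct (tl b i) as [|c] eqn:Ec.
      * simpl INR in *. rewrite Rmult_0_l in IHi |- *.
        destruct (Nat.eq_dec (dt + d) 0) as [h0|h0].
        -- assert (d = 0%nat) by lia. subst d. assert (i = 0%nat) by lia. subst i.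
           rewrite M0. unfold modx. simpl. rewrite Ec. simpl. ring.
        -- assert (0 < INR dt + INR d). { rewrite <- plus_INR. apply lt_0_INR. lia. }
           assert (M d (modx (tl b) i S) = 0) as ->.
           { apply (Rmult_eq_reg_l (INR dt + INR d)). rewrite IHi. ring. lra. }
           ring.
      * simpl pred in Hd.
        set (dd := deg_upto (modx (tl b) i pred) d) in *.
        set (du := deg_upto (modx (tl b) i S) d) in *.
        assert (Edu : (du + d = (dd + d) + 2)%nat) by lia.
        rewrite Edu. pose proof (W2 (b 0%nat) (dd + d)) as H.
        assert (Edt : INR dt = INR dd + 1).
        { replace dt with (dd + 1)%nat by lia. rewrite plus_INR. simpl. ring. }
        rewrite Edt in IHi.
        transitivity (W (b 0%nat) (dd + d + 2) * (INR (b 0%nat) + INR (dd + d) + 2) * M d (modx (tl b) i S)).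
        { rewrite !plus_INR, S_INR, Edt. ring. }
        rewrite H. rewrite plus_INR.
        transitivity (W (b 0%nat) (dd + d) * ((INR dd + 1 + INR d) * M d (modx (tl b) i S))). ring.
        rewrite IHi. ring.
Qed.

Definition lsum {A : Type} (f : A -> R) (l : list A) : R := fold_right (fun a acc => f a + acc) 0 l.

Lemma lsum_app {A} (f : A -> R) l1 l2 : lsum f (l1 ++ l2) = lsum f l1 + lsum f l2.
Proof. induction l1; simpl. ring. unfold lsum in *. simpl. rewrite IHl1. ring. Qed.

Lemma lsum_scal {A} (f : A -> R) c l : lsum (fun a => c * f a) l = c * lsum f l.
Proof. induction l; simpl. ring. unfold lsum in *; simpl. rewrite IHl. ring. Qed.

Lemma lsum_plus {A} (f g : A -> R) l : lsum (fun a => f a + g a) l = lsum f l + lsum g l.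
Proof. induction l; simpl. ring. unfold lsum in *; simpl. rewrite IHl. ring. Qed.

Lemma lsum_ext {A} (f g : A -> R) l : (forall a, In a l -> f a = g a) -> lsum f l = lsum g l.
Proof.
  induction l; intros H; simpl. reflexivity. unfold lsum in *; simpl.
  rewrite H by (left; auto). rewrite IHl. reflexivity. intros; apply H; right; auto.
Qed.

Lemma lsum_zero {A} (l : list A) : lsum (fun _ => 0) l = 0.
Proof. induction l; simpl. reflexivity. unfold lsum in *; simpl. rewrite IHl. ring. Qed.

Lemma lsum_cons {A} (f : A -> R) a l : lsum f (a :: l) = f a + lsum f l.
Proof. reflexivity. Qed.

Lemma lsum_swap {A B} (f : A -> B -> R) l1 l2 :
  lsum (fun a => lsum (fun b => f a b) l2) l1 = lsum (fun b => lsum (fun a => f a b) l1) l2.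
Proof.
  induction l1 as [|a l1 IH].
  - simpl. rewrite lsum_zero. reflexivity.
  - rewrite lsum_cons, IH.
    rewrite (lsum_ext (fun b => lsum (fun a0 => f a0 b) (a :: l1)) (fun b => f a b + lsum (fun a0 => f a0 b) l1)).
    rewrite lsum_plus. reflexivity. intros; reflexivity.
Qed.

Lemma deg_lsum b d : INR (deg_upto b d) = lsum (fun j => INR (b j)) (seq 0 (S d)).
Proof.
  induction d as [|d IH]. simpl. unfold lsum; simpl. ring.
  rewrite seq_S, lsum_app. simpl deg_upto. rewrite plus_INR, IH. rewrite lsum_cons. change (lsum (fun j : nat => INR (b j)) nil) with 0. simpl (0 + S d)%nat. ring.
Qed.

Definition dn2 (a : nat -> nat) j := modx a j (fun n => n - 2)%nat.

Lemma modx_at a i f : modx a i f i = f (a i).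
Proof. unfold modx. rewrite Nat.eqb_refl. reflexivity. Qed.
Lemma modx_ne a i f l : l <> i -> modx a i f l = a l.
Proof. intros h. unfold modx. apply Nat.eqb_neq in h. rewrite h. reflexivity. Qed.

Lemma EDj d b j : (j <= d)%nat ->
  INR (b j) * (INR (deg_upto b d) - 1 + INR d) * M d b = INR (b j) * INR (b j - 1) * M d (dn2 b j).
Proof.
  intros hj. destruct (b j) as [|c] eqn:E. simpl. ring.
  pose proof (MI d (modx b j pred) j hj) as H.
  replace (modx (modx b j pred) j S) with b in H.
  2:{ apply functional_extensionality; intros l. unfold modx.
      destruct (Nat.eqb l j) eqn:E2; auto. apply Nat.eqb_eq in E2; subst. rewrite E. reflexivity. }
  replace (modx (modx b j pred) j pred) with (dn2 b j) in H.
  2:{ apply functional_extensionality; intros l. unfold dn2, modx.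
      destruct (Nat.eqb l j) eqn:E2; auto. lia. }
  rewrite modx_at, E in H. simpl pred in H.
  pose proof (deg_modx b j pred d hj) as Hd. rewrite E in Hd. simpl pred in Hd.
  assert (INR (deg_upto (modx b j pred) d) = INR (deg_upto b d) - 1) as Hdd.
  { replace (deg_upto b d) with (deg_upto (modx b j pred) d + 1)%nat by lia.
    rewrite plus_INR. simpl. ring. }
  rewrite Hdd in H. replace (S c - 1)%nat with c by lia.
  transitivity (INR (S c) * ((INR (deg_upto b d) - 1 + INR d) * M d b)). ring.
  rewrite H. ring.
Qed.

Lemma ED d b : INR (deg_upto b d) * (INR (deg_upto b d) - 1 + INR d) * M d b =
  lsum (fun j => INR (b j) * INR (b j - 1) * M d (dn2 b j)) (seq 0 (S d)).
Proof.
  rewrite (lsum_ext _ (fun j => INR (b j) * ((INR (deg_upto b d) - 1 + INR d) * M d b))).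
  - rewrite (lsum_ext _ (fun j => ((INR (deg_upto b d) - 1 + INR d) * M d b) * INR (b j))).
    rewrite lsum_scal, <- deg_lsum. ring. intros; ring.
  - intros j hj. apply in_seq in hj. rewrite <- EDj by lia. ring.
Qed.

Lemma PJ d a i j : (i <= d)%nat -> (j <= d)%nat ->
  INR (a j) * INR (a j - 1) * ((INR (deg_upto a d) - 2 + INR d) * M d (modx (dn2 a j) i S))
  = INR (a i) * (INR (modx a i pred j) * INR (modx a i pred j - 1) * M d (dn2 (modx a i pred) j)).
Proof.
  intros hi hj.
  destruct (Nat.le_gt_cases 2 (a j)) as [h2|h2].
  - pose proof (MI d (dn2 a j) i hi) as H.
    pose proof (deg_modx a j (fun n => n - 2)%nat d hj) as Hd. fold (dn2 a j) in Hd.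
    assert (INR (deg_upto (dn2 a j) d) = INR (deg_upto a d) - 2) as Hdd.
    { replace (deg_upto a d) with (deg_upto (dn2 a j) d + 2)%nat by (cbv beta in Hd; lia).
      rewrite plus_INR. simpl. ring. }
    rewrite Hdd in H. rewrite H.
    replace (modx (dn2 a j) i pred) with (dn2 (modx a i pred) j).
    2:{ apply functional_extensionality; intros l. unfold dn2, modx.
        destruct (Nat.eqb l j) eqn:E1; destruct (Nat.eqb l i) eqn:E2; try reflexivity.
        apply Nat.eqb_eq in E1. apply Nat.eqb_eq in E2. subst. simpl. lia. }
    destruct (Nat.eq_dec i j) as [->|hne].
    + unfold dn2. rewrite !modx_at.
      replace (a j - 1 - 1)%nat with (a j - 2)%nat by lia.
      replace (pred (a j)) with (a j - 1)%nat by lia. replace (a j - 1 - 1)%nat with (a j - 2)%nat by lia. ring.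
    + unfold dn2. rewrite (modx_ne a i pred j) by auto.
      rewrite (modx_ne a j _ i) by auto. ring.
  - assert (E : INR (a j) * INR (a j - 1) = 0).
    { destruct (a j) as [|[|c]]. simpl; ring. simpl; ring. lia. }
    rewrite E. 
    destruct (Nat.eq_dec i j) as [->|hne].
    + rewrite modx_at. destruct (a j) as [|[|c]]; simpl; try ring. lia.
    + rewrite (modx_ne a i pred j) by auto.
      transitivity (INR (a i) * ((INR (a j) * INR (a j - 1)) * M d (dn2 (modx a i pred) j))).
      rewrite E; ring. ring.
Qed.

Lemma PMI d a i : (i <= d)%nat ->
  let k := INR (deg_upto a d) in
  (k + INR d) * (k - 1) * (k - 2 + INR d) * M d (modx a i S) =
  (k - 2 + INR d) * lsum (fun j => INR (a j) * INR (a j - 1) * M d (modx (dn2 a j) i S)) (seq 0 (S d)).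
Proof.
  intros hi k.
  rewrite <- lsum_scal.
  rewrite (lsum_ext _ (fun j => INR (a i) * (INR (modx a i pred j) * INR (modx a i pred j - 1) * M d (dn2 (modx a i pred) j)))).
  2:{ intros j hj. apply in_seq in hj. rewrite <- PJ by lia. fold k. ring. }
  rewrite lsum_scal. rewrite <- ED.
  pose proof (MI d a i hi) as H. fold k in H.
  transitivity ((k - 1) * (k - 2 + INR d) * ((k + INR d) * M d (modx a i S))). ring.
  rewrite H.
  destruct (a i) as [|c] eqn:E. simpl; ring.
  pose proof (deg_modx a i pred d hi) as Hd. rewrite E in Hd. simpl pred in Hd.
  assert (INR (deg_upto (modx a i pred) d) = k - 1) as ->.
  { unfold k. replace (deg_upto a d) with (deg_upto (modx a i pred) d + 1)%nat by lia.
    rewrite plus_INR. simpl. ring. }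
  ring.
Qed.

Definition box d (v : nat -> R) := forall i, (i <= d)%nat -> Rabs (v i) <= 1.
Definition nice d (G : (nat -> R) -> R) :=
  (exists B, forall v, box d v -> Rabs (G v) <= B) /\
  (forall eps, 0 < eps -> exists del, 0 < del /\ forall v v', box d v -> box d v' ->
     (forall i, (i <= d)%nat -> Rabs (v i - v' i) <= del) -> Rabs (G v - G v') <= eps).

Definition Gs (G : (nat -> R) -> R) th := fun w : nat -> R => G (cons_vec (cos th) (fun i => sin th * w i)).

Lemma abs_pow_le1 x n : Rabs x <= 1 -> Rabs (x ^ n) <= 1.
Proof.
  intros h. induction n; simpl. rewrite Rabs_R1; lra.
  rewrite Rabs_mult. pose proof (Rabs_pos x). pose proof (Rabs_pos (x^n)). nra.
Qed.

Lemma abs_sin_le1 x : Rabs (sin x) <= 1.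
Proof. apply Rabs_le. apply SIN_bound. Qed.
Lemma abs_cos_le1 x : Rabs (cos x) <= 1.
Proof. apply Rabs_le. apply COS_bound. Qed.

Lemma box_cons d th w : box d w -> box (S d) (cons_vec (cos th) (fun i => sin th * w i)).
Proof.
  intros h [|i] hi; simpl. apply abs_cos_le1.
  rewrite Rabs_mult. pose proof (h i ltac:(lia)). pose proof (abs_sin_le1 th).
  pose proof (Rabs_pos (sin th)). pose proof (Rabs_pos (w i)). nra.
Qed.

Lemma box_neg d v : box d v -> box d (fun i => - v i).
Proof. intros h i hi. rewrite Rabs_Ropp. auto. Qed.

Lemma nice_slice d G th : nice (S d) G -> nice d (Gs G th).
Proof.
  intros [[B hB] hU]. split.
  - exists B. intros v hv. apply hB. now apply box_cons.
  - intros eps he. destruct (hU eps he) as [del [hd H]]. exists del. split; auto.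
    intros v v' hv hv' hc. apply H; try now apply box_cons.
    intros [|i] hi; simpl. rewrite Rminus_eq_0, Rabs_R0; lra.
    rewrite <- Rmult_minus_distr_l, Rabs_mult.
    pose proof (hc i ltac:(lia)). pose proof (abs_sin_le1 th).
    pose proof (Rabs_pos (sin th)). pose proof (Rabs_pos (v i - v' i)). nra.
Qed.

Lemma nice_plus d G H : nice d G -> nice d H -> nice d (fun v => G v + H v).
Proof.
  intros [[B1 hB1] hU1] [[B2 hB2] hU2]. split.
  - exists (B1 + B2). intros v hv. eapply Rle_trans. apply Rabs_triang.
    pose proof (hB1 v hv); pose proof (hB2 v hv); lra.
  - intros eps he. destruct (hU1 (eps/2) ltac:(lra)) as [d1 [h1 HU1]].
    destruct (hU2 (eps/2) ltac:(lra)) as [d2 [h2 HU2]].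
    exists (Rmin d1 d2). split. now apply Rmin_pos.
    intros v v' hv hv' hc.
    replace (G v + H v - (G v' + H v')) with ((G v - G v') + (H v - H v')) by ring.
    eapply Rle_trans. apply Rabs_triang.
    assert (Rabs (G v - G v') <= eps/2).
    { apply HU1; auto. intros i hi. eapply Rle_trans. apply hc; auto. apply Rmin_l. }
    assert (Rabs (H v - H v') <= eps/2).
    { apply HU2; auto. intros i hi. eapply Rle_trans. apply hc; auto. apply Rmin_r. }
    lra.
Qed.

Lemma nice_mult d G H : nice d G -> nice d H -> nice d (fun v => G v * H v).
Proof.
  intros [[B1 hB1] hU1] [[B2 hB2] hU2].
  assert (hB1' : forall v, box d v -> Rabs (G v) <= Rabs B1 + 1).
  { intros v hv. pose proof (hB1 v hv). pose proof (Rle_abs B1). lra. }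
  assert (hB2' : forall v, box d v -> Rabs (H v) <= Rabs B2 + 1).
  { intros v hv. pose proof (hB2 v hv). pose proof (Rle_abs B2). lra. }
  set (C1 := Rabs B1 + 1) in *. set (C2 := Rabs B2 + 1) in *.
  assert (0 < C1) by (unfold C1; pose proof (Rabs_pos B1); lra).
  assert (0 < C2) by (unfold C2; pose proof (Rabs_pos B2); lra).
  split.
  - exists (C1 * C2). intros v hv. rewrite Rabs_mult.
    pose proof (hB1' v hv); pose proof (hB2' v hv). pose proof (Rabs_pos (G v)).
    pose proof (Rabs_pos (H v)). nra.
  - intros eps he.
    destruct (hU1 (eps/(2*C2))) as [d1 [h1 HU1]]. apply Rdiv_lt_0_compat; lra.
    destruct (hU2 (eps/(2*C1))) as [d2 [h2 HU2]]. apply Rdiv_lt_0_compat; lra.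
    exists (Rmin d1 d2). split. now apply Rmin_pos.
    intros v v' hv hv' hc.
    replace (G v * H v - G v' * H v') with ((G v - G v') * H v + G v' * (H v - H v')) by ring.
    eapply Rle_trans. apply Rabs_triang. rewrite !Rabs_mult.
    assert (Rabs (G v - G v') <= eps/(2*C2)).
    { apply HU1; auto. intros i hi. eapply Rle_trans. apply hc; auto. apply Rmin_l. }
    assert (Rabs (H v - H v') <= eps/(2*C1)).
    { apply HU2; auto. intros i hi. eapply Rle_trans. apply hc; auto. apply Rmin_r. }
    pose proof (hB2' v hv). pose proof (hB1' v' hv').
    pose proof (Rabs_pos (G v - G v')). pose proof (Rabs_pos (H v - H v')).
    pose proof (Rabs_pos (H v)). pose proof (Rabs_pos (G v')).
    assert (Rabs (G v - G v') * Rabs (H v) <= eps/(2*C2) * C2) by (apply Rmult_le_compat; auto).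
    assert (Rabs (G v') * Rabs (H v - H v') <= C1 * (eps/(2*C1))) by (apply Rmult_le_compat; auto).
    replace (eps / (2 * C2) * C2) with (eps/2) in * by (field; lra).
    replace (C1 * (eps / (2 * C1))) with (eps/2) in * by (field; lra).
    lra.
Qed.

Lemma nice_const d c : nice d (fun _ => c).
Proof.
  split. exists (Rabs c). intros; lra.
  intros eps he. exists 1. split. lra. intros. rewrite Rminus_eq_0, Rabs_R0; lra.
Qed.

Lemma nice_coord d i : (i <= d)%nat -> nice d (fun v => v i).
Proof.
  intros hi. split. exists 1. intros v hv; apply hv; auto.
  intros eps he. exists eps. split; [lra|]. intros v v' _ _ hc. apply hc; auto.
Qed.

Lemma nice_scal d c G : nice d G -> nice d (fun v => c * G v).
Proof. intros; apply nice_mult; auto; apply nice_const. Qed.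

Lemma RInt_refl (f : R -> R) : (forall x, continuous f x) ->
  RInt (fun th => f (PI - th)) 0 PI = RInt f 0 PI.
Proof.
  intros hc.
  assert (Hc : ex_RInt f (-1 * 0 + PI) (-1 * PI + PI)).
  { apply ex_RInt_swap. replace (-1 * 0 + PI) with PI by ring. replace (-1 * PI + PI) with 0 by ring.
    apply cont_exRInt. apply PI_ge0. auto. }
  pose proof (RInt_comp_lin (V:=R_CompleteNormedModule) f (-1) PI 0 PI Hc) as H.
  replace (-1 * 0 + PI) with PI in H by ring. replace (-1 * PI + PI) with 0 in H by ring.
  assert (H2 : RInt f PI 0 = - RInt f 0 PI).
  { rewrite <- (opp_RInt_swap (V:=R_CompleteNormedModule)). reflexivity.
    apply cont_exRInt. apply PI_ge0. auto. }
  rewrite H2 in H.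
  unfold scal in H; simpl in H; unfold mult in H; simpl in H.
  assert (E : RInt (fun y : R => -1 * (f (-1 * y + PI))) 0 PI = -1 * RInt (fun th => f (PI - th)) 0 PI).
  { rewrite <- RInt_scalR. apply RInt_extR. intros x.
    f_equal. f_equal. ring.
    apply cont_exRInt. apply PI_ge0. intros x.
    apply (continuous_comp (fun th => PI - th) f). 
    apply (cont_plus (fun _ => PI) (fun th => - th)). apply cont_const.
    apply (continuous_opp (V:=R_NormedModule) (fun th : R => th)). apply cont_id. apply hc. }
  rewrite E in H. unfold opp in H; simpl in H. lra.
Qed.

Definition Cst d := 2 * PI ^ d.

Lemma Cst_pos d : 0 < Cst d.
Proof. unfold Cst. pose proof (pow_lt PI d PI_RGT_0). lra. Qed.

Lemma cos_PI_m x : cos (PI - x) = - cos x.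
Proof. rewrite cos_minus, cos_PI, sin_PI. ring. Qed.

Definition Keyd d :=
  (forall G H, nice d G -> nice d H ->
     sphere_int d (fun v => G v + H v) = sphere_int d G + sphere_int d H) /\
  (forall G e, nice d G -> (forall v, box d v -> Rabs (G v) <= e) ->
     Rabs (sphere_int d G) <= Cst d * e) /\
  (forall G, nice d G -> sphere_int d (fun v => G (fun i => - v i)) = sphere_int d G).

Lemma integrand_cont d G : Keyd d -> nice (S d) G ->
  forall x, continuous (fun th : R => sin th ^ d * sphere_int d (Gs G th)) x.
Proof.
  intros [Kadd [Kb _]] hG x. apply cont_mult. apply cont_pow, cont_sin.
  apply eps_cont. intros eps he.
  set (e' := eps / (2 * Cst d)).
  assert (he' : 0 < e') by (unfold e'; apply Rdiv_lt_0_compat; [lra| pose proof (Cst_pos d); lra]).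
  destruct (proj2 hG e' he') as [del [hdel HU]].
  destruct (cont_eps cos x (cont_cos x) del hdel) as [d1 [h1 H1]].
  destruct (cont_eps sin x (cont_sin x) del hdel) as [d2 [h2 H2]].
  exists (Rmin d1 d2). split. now apply Rmin_pos.
  intros y hy.
  assert (hy1 : Rabs (y - x) < d1) by (eapply Rlt_le_trans; [apply hy|apply Rmin_l]).
  assert (hy2 : Rabs (y - x) < d2) by (eapply Rlt_le_trans; [apply hy|apply Rmin_r]).
  specialize (H1 y hy1). specialize (H2 y hy2).
  assert (Hn1 := nice_slice d G y hG). assert (Hn2 := nice_scal d (-1) _ (nice_slice d G x hG)).
  replace (sphere_int d (Gs G y) - sphere_int d (Gs G x))
    with (sphere_int d (fun w => Gs G y w + (-1) * Gs G x w)).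
  2:{ rewrite Kadd by auto. rewrite S_scal. ring. }
  eapply Rle_lt_trans. apply (Kb _ e'). now apply nice_plus.
  - intros w hw. unfold Gs. replace (G (cons_vec (cos y) (fun i => sin y * w i)) +
       -1 * G (cons_vec (cos x) (fun i => sin x * w i))) with
      (G (cons_vec (cos y) (fun i => sin y * w i)) - G (cons_vec (cos x) (fun i => sin x * w i))) by ring.
    apply HU; try now apply box_cons.
    intros [|i] hi; simpl. lra.
    rewrite <- Rmult_minus_distr_r, Rabs_mult. pose proof (hw i ltac:(lia)).
    pose proof (Rabs_pos (sin y - sin x)). pose proof (Rabs_pos (w i)). nra.
  - unfold e'. pose proof (Cst_pos d). replace (Cst d * (eps / (2 * Cst d))) with (eps/2) by (field; lra). lra.
Qed.

Lemma neg_cons th w : (fun i => - cons_vec (cos th) (fun j => sin th * w j) i) =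
   cons_vec (cos (PI - th)) (fun j => sin (PI - th) * (- w j)).
Proof.
  apply functional_extensionality. intros [|i]; simpl. rewrite cos_PI_m; ring.
  rewrite sin_PI_x; ring.
Qed.

Lemma sphere_S d G : sphere_int (S d) G = Rint (fun th => sin th ^ d * sphere_int d (Gs G th)) 0 PI.
Proof. reflexivity. Qed.

Lemma key d : Keyd d.
Proof.
  induction d as [|d IH].
  - split; [|split].
    + intros G H _ _. simpl. ring.
    + intros G e _ hb. simpl. unfold Cst. simpl.
      assert (b1 : box 0 (cons_vec 1 (fun _ => 0))).
      { intros i hi. assert (i = 0%nat) by lia. subst. simpl. rewrite Rabs_R1; lra. }
      assert (b2 : box 0 (cons_vec (-1) (fun _ => 0))).
      { intros i hi. assert (i = 0%nat) by lia. subst. simpl. unfold Rabs; destruct Rcase_abs; lra. }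
      eapply Rle_trans. apply Rabs_triang. pose proof (hb _ b1). pose proof (hb _ b2). lra.
    + intros G _. simpl.
      replace (fun i => - cons_vec 1 (fun _ => 0) i) with (cons_vec (-1) (fun _ => 0));
        [| apply functional_extensionality; intros [|i]; simpl; ring].
      replace (fun i => - cons_vec (-1) (fun _ => 0) i) with (cons_vec 1 (fun _ => 0));
        [ring | apply functional_extensionality; intros [|i]; simpl; ring].
  - assert (IH' := IH). destruct IH as [Kadd [Kb Kneg]].
    assert (Hf : forall G, nice (S d) G -> forall x, continuous (fun th : R => sin th ^ d * sphere_int d (Gs G th)) x).
    { intros G hG. now apply integrand_cont. }
    split; [|split].
    + intros G H hG hH. rewrite !sphere_S.
      rewrite (Rint_cont _ 0 PI PI_ge0 (Hf G hG)).
      rewrite (Rint_cont _ 0 PI PI_ge0 (Hf H hH)).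
      rewrite <- RInt_plusR by (apply cont_exRInt; auto; apply PI_ge0).
      rewrite Rint_int.
      * apply RInt_extR. intros th.
        change (Gs (fun v => G v + H v) th) with (fun w => Gs G th w + Gs H th w).
        rewrite Kadd by (apply nice_slice; auto). ring.
      * apply cont_int. apply PI_ge0. intros x.
        apply (integrand_cont d (fun v => G v + H v) IH'). now apply nice_plus.
    + intros G e hG hb. rewrite !sphere_S.
      rewrite (Rint_cont _ 0 PI PI_ge0 (Hf G hG)).
      eapply Rle_trans. apply (abs_RInt_le_const _ 0 PI (Cst d * e)). apply PI_ge0. apply cont_exRInt; auto. apply PI_ge0.
      * intros t _. rewrite Rabs_mult.
        assert (Rabs (sphere_int d (Gs G t)) <= Cst d * e).
        { apply Kb. now apply nice_slice. intros w hw. apply hb. now apply box_cons. }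
        pose proof (abs_pow_le1 (sin t) d (abs_sin_le1 t)).
        pose proof (Rabs_pos (sin t ^ d)). pose proof (Rabs_pos (sphere_int d (Gs G t))).
        assert (Rabs (sin t ^ d) * Rabs (sphere_int d (Gs G t)) <= 1 * (Cst d * e)).
        { apply Rmult_le_compat; auto. }
        lra.
      * unfold Cst. simpl. right. ring.
    + intros G hG. rewrite !sphere_S.
      rewrite (Rint_cont _ 0 PI PI_ge0 (Hf G hG)). rewrite <- RInt_refl by auto.
      rewrite Rint_int.
      * apply RInt_extR. intros th. rewrite sin_PI_x. f_equal.
        replace (Gs (fun v => G (fun i => - v i)) th) with (fun w => Gs G (PI - th) (fun i => - w i)).
        apply Kneg. apply nice_slice; auto.
        apply functional_extensionality; intro w; unfold Gs; cbv beta. rewrite neg_cons. reflexivity.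
      * apply cont_int. apply PI_ge0. intros x.
        assert (hG' : nice (S d) (fun v => G (fun i => - v i))).
        { destruct hG as [[B hB] hU]. split.
          - exists B. intros v hv. apply hB. now apply box_neg.
          - intros eps he. destruct (hU eps he) as [del [hd HH]]. exists del; split; auto.
            intros v v' hv hv' hc. apply HH; try now apply box_neg.
            intros i hi. replace (- v i - - v' i) with (- (v i - v' i)) by ring.
            rewrite Rabs_Ropp; auto. }
        exact (integrand_cont d _ IH' hG' x).
Qed.

Lemma cont_of_pt (f : R -> R) x : continuity_pt f x -> continuous f x.
Proof. intros; now apply continuity_pt_filterlim. Qed.

Lemma acos_cont_pos x : 0 < x -> continuous acos x.
Proof.
  intros hx.
  apply (continuous_ext_loc (T:=R_UniformSpace) (U:=R_UniformSpace) acos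
     (fun y => atan (sqrt (1 - y * y) * / y))).
  - exists (mkposreal x hx). intros y hy. unfold ball in hy; simpl in hy.
    unfold AbsRing_ball, abs, minus, plus, opp in hy; simpl in hy.
    assert (0 < y). { apply Rabs_lt_between in hy. lra. }
    rewrite acos_atan by auto. unfold Rsqr, Rdiv. reflexivity.
  - apply (continuous_comp (fun y => sqrt (1 - y * y) * / y) atan).
    + apply cont_mult. apply continuous_sqrt_comp.
      apply (cont_plus (fun _ => 1) (fun y => - (y * y))). apply cont_const.
      apply (continuous_opp (V:=R_NormedModule) (fun y : R => y * y)). apply cont_mult; apply cont_id.
      apply continuous_Rinv. lra.
    + apply cont_of_pt. apply derivable_continuous_pt. apply derivable_pt_atan.
Qed.

Lemma acos_cont x : continuous acos x.
Proof.
  destruct (Rtotal_order x 0) as [h|[h|h]].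
  - apply (continuous_ext (T:=R_UniformSpace) (U:=R_UniformSpace) (fun y => PI - acos (- y))).
    intros y. change (PI - acos (- y) = acos y). rewrite acos_opp. ring.
    apply (cont_plus (fun _ => PI) (fun y => - acos (- y))). apply cont_const.
    apply (continuous_opp (V:=R_NormedModule) (fun y : R => acos (- y))).
    apply (continuous_comp (fun y : R => - y) acos).
    apply (continuous_opp (V:=R_NormedModule) (fun y : R => y)). apply cont_id.
    apply acos_cont_pos. lra.
  - subst. apply cont_of_pt. apply derivable_continuous_pt. apply derivable_pt_acos. lra.
  - now apply acos_cont_pos.
Qed.

Lemma Kinf_cont x : continuous Kinf x.
Proof.
  unfold Kinf. apply cont_mult. apply cont_mult. apply cont_const. apply cont_id.
  apply (cont_plus (fun _ => PI) (fun y => - acos y)). apply cont_const.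
  apply (continuous_opp (V:=R_NormedModule) acos). apply acos_cont.
Qed.

Lemma nice_comp d (f : R -> R) G : (forall x, continuous f x) -> nice d G -> nice d (fun v => f (G v)).
Proof.
  intros hf [[B hB] hU].
  set (B' := Rabs B + 1).
  assert (hB' : forall v, box d v -> -B' <= G v <= B').
  { intros v hv. pose proof (hB v hv). pose proof (Rle_abs B). unfold B' in *. unfold Rabs in H; destruct Rcase_abs in H; lra. }
  assert (hBB : -B' <= B') by (unfold B'; pose proof (Rabs_pos B); lra).
  split.
  - destruct (continuity_ab_maj (fun c => Rabs (f c)) (-B') B' hBB) as [Mx [HM _]].
    { intros c _. apply cont_pt. apply (continuous_comp f Rabs). apply hf.
      apply cont_of_pt. apply Rcontinuity_abs. }
    exists (Rabs (f Mx)). intros v hv. apply HM. auto.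
  - intros eps he.
    assert (HU := Heine f (fun c => -B' <= c <= B') (compact_P3 _ _) (fun x _ => cont_pt f x (hf x))).
    destruct (HU (mkposreal eps he)) as [del hdel].
    destruct (hU (del/2)) as [d1 [h1 H1]]. pose proof (cond_pos del); lra.
    exists d1. split; auto. intros v v' hv hv' hc.
    left. apply hdel; auto. pose proof (H1 v v' hv hv' hc). pose proof (cond_pos del). lra.
Qed.

Lemma nice_pow d G n : nice d G -> nice d (fun v => G v ^ n).
Proof.
  intros h. induction n; simpl. apply nice_const. now apply nice_mult.
Qed.

Lemma nice_prod d a n : (n <= d)%nat -> nice d (fun v => prod_upto (fun i => v i ^ a i) n).
Proof.
  induction n; intros hn; simpl. apply nice_pow, nice_coord; lia.
  apply nice_mult. apply IHn; lia. apply nice_pow, nice_coord; lia.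
Qed.

Lemma nice_mono d m : nice d (mono_eval d m).
Proof. unfold mono_eval. apply nice_scal, nice_prod. lia. Qed.

Lemma nice_peval d p : nice d (peval d p).
Proof.
  induction p as [|m p IH]. apply nice_const.
  apply (nice_plus d (mono_eval d m) (peval d p)). apply nice_mono. exact IH.
Qed.

Lemma nice_dot d u n : (n <= d)%nat -> nice d (fun v => sum_f_R0 (fun i => u i * v i) n).
Proof.
  induction n; intros hn; simpl. apply nice_scal, nice_coord; lia.
  apply nice_plus. apply IHn; lia. apply nice_scal, nice_coord; lia.
Qed.

Lemma Sadd d G H : nice d G -> nice d H ->
  sphere_int d (fun v => G v + H v) = sphere_int d G + sphere_int d H.
Proof. apply (proj1 (key d)). Qed.

Lemma Sneg d G : nice d G -> sphere_int d (fun v => G (fun i => - v i)) = sphere_int d G.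
Proof. apply (proj2 (proj2 (key d))). Qed.

Lemma prod_modx v a i n : (i <= n)%nat ->
  v i * prod_upto (fun j => v j ^ a j) n = prod_upto (fun j => v j ^ modx a i S j) n.
Proof.
  induction n; intros hi; simpl.
  - assert (i = 0%nat) by lia. subst. unfold modx. simpl. reflexivity.
  - destruct (Nat.eq_dec i (S n)) as [->|hne].
    + rewrite modx_at. rewrite (prod_upto_ext (fun j => v j ^ modx a (S n) S j) (fun j => v j ^ a j)).
      simpl. ring. intros j hj. rewrite modx_ne by lia. reflexivity.
    + rewrite <- IHn by lia. rewrite modx_ne by lia. ring.
Qed.

Lemma S_vi_peval d i q : (i <= d)%nat ->
  sphere_int d (fun v => v i * peval d q v) = lsum (fun m => fst m * M d (modx (snd m) i S)) q.
Proof.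
  intros hi. induction q as [|m q IH].
  - simpl. replace (fun v : nat -> R => v i * 0) with (fun _ : nat -> R => 0).
    apply S_zero. apply functional_extensionality; intros; ring.
  - rewrite lsum_cons. rewrite <- IH.
    replace (fun v => v i * peval d (m :: q) v) with
       (fun v => fst m * P d (modx (snd m) i S) v + v i * peval d q v).
    rewrite Sadd. rewrite S_scal. reflexivity.
    apply nice_scal, nice_prod; lia.
    apply nice_mult. apply nice_coord; auto. apply nice_peval.
    apply functional_extensionality; intros v. simpl. unfold mono_eval, P.
    rewrite <- prod_modx by auto. ring.
Qed.

Lemma lsum_flat_map {A B} (f : B -> R) (g : A -> list B) l :
  lsum f (flat_map g l) = lsum (fun a => lsum f (g a)) l.
Proof. induction l; simpl. reflexivity. rewrite lsum_app, IHl. reflexivity. Qed.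

Lemma lsum_map {A B} (f : B -> R) (g : A -> B) l : lsum f (map g l) = lsum (fun a => f (g a)) l.
Proof. induction l; simpl. reflexivity. unfold lsum in *; simpl. rewrite IHl. reflexivity. Qed.

Lemma S_vi_Y_zero d k p i : (1 <= d)%nat -> (3 <= k)%nat -> homogeneous d k p -> harmonic d p ->
  (i <= d)%nat -> sphere_int d (fun v => v i * peval d p v) = 0.
Proof.
  intros hd hk hhom hharm hi.
  rewrite S_vi_peval by auto.
  assert (H0 : sphere_int d (fun v => v i * peval d (laplacian d p) v) = 0).
  { replace (fun v => v i * peval d (laplacian d p) v) with (fun _ : nat -> R => 0).
    apply S_zero. apply functional_extensionality; intros v. rewrite hharm. ring. }
  rewrite S_vi_peval in H0 by auto. unfold laplacian in H0.
  rewrite lsum_flat_map in H0.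
  rewrite (lsum_ext _ (fun j => lsum (fun m => fst m * (INR (snd m j) * INR (snd m j - 1) *
        M d (modx (dn2 (snd m) j) i S))) p)) in H0.
  2:{ intros j _. rewrite lsum_map. apply lsum_ext. intros [c a] _. unfold d2_mono, dn2. simpl. unfold modx. cbv beta. ring. }
  rewrite (lsum_swap (fun j m => fst m * (INR (snd m j) * INR (snd m j - 1) *
        M d (modx (dn2 (snd m) j) i S)))) in H0.
  set (K := INR k).
  assert (HP : forall m, In m p ->
     (K + INR d) * (K - 1) * (K - 2 + INR d) * (fst m * M d (modx (snd m) i S)) =
     (K - 2 + INR d) * lsum (fun j => fst m * (INR (snd m j) * INR (snd m j - 1) *
        M d (modx (dn2 (snd m) j) i S))) (seq 0 (S d))).
  { intros m hm. unfold homogeneous in hhom. rewrite Forall_forall in hhom.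
    pose proof (PMI d (snd m) i hi) as H. cbv zeta in H. rewrite (hhom m hm) in H. fold K in H.
    rewrite lsum_scal.
    transitivity (fst m * ((K + INR d) * (K - 1) * (K - 2 + INR d) * M d (modx (snd m) i S))). ring.
    rewrite H. ring. }
  assert (HS : (K + INR d) * (K - 1) * (K - 2 + INR d) *
      lsum (fun m => fst m * M d (modx (snd m) i S)) p = 0).
  { rewrite <- lsum_scal. rewrite (lsum_ext _ _ p HP). rewrite lsum_scal. rewrite H0. ring. }
  assert (hK : 3 <= K). { unfold K. replace 3 with (INR 3) by (simpl; ring). apply le_INR; lia. }
  assert (hD : 1 <= INR d). { replace 1 with (INR 1) by (simpl; ring). apply le_INR; lia. }
  assert (0 < (K + INR d) * (K - 1) * (K - 2 + INR d)).
  { apply Rmult_lt_0_compat. apply Rmult_lt_0_compat. lra. lra. lra. }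
  apply (Rmult_eq_reg_l ((K + INR d) * (K - 1) * (K - 2 + INR d))). rewrite HS. ring. lra.
Qed.

Lemma peval_neg d k p : homogeneous d k p -> Nat.odd k = true ->
  forall v, peval d p (fun i => - v i) = - peval d p v.
Proof.
  intros hh ho v. apply Nat.odd_spec in ho. destruct ho as [n ->].
  induction p as [|m p IH]. simpl; ring.
  inversion hh; subst. simpl. rewrite IH by auto. unfold mono_eval.
  rewrite (prod_upto_ext (fun i => (- v i) ^ snd m i) (fun i => (-1 * v i) ^ snd m i)).
  rewrite prod_upto_scale. rewrite H1. replace (2 * n + 1)%nat with (S (2 * n)) by lia.
  rewrite pow_1_odd. ring.
  intros; f_equal; ring.
Qed.

Lemma dot_neg d u v : dot d u (fun i => - v i) = - dot d u v.
Proof. unfold dot. induction d; simpl. ring. rewrite IHd. ring. Qed.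

Lemma S_lin d k p u : (1 <= d)%nat -> (3 <= k)%nat -> homogeneous d k p -> harmonic d p ->
  forall n, (n <= d)%nat -> sphere_int d (fun v => sum_f_R0 (fun i => u i * v i) n * peval d p v) = 0.
Proof.
  intros hd hk hh hH n. induction n; intros hn.
  - simpl. replace (fun v : nat -> R => u 0%nat * v 0%nat * peval d p v)
      with (fun v => u 0%nat * (v 0%nat * peval d p v)).
    rewrite S_scal, (S_vi_Y_zero d k) by (auto; lia). ring.
    apply functional_extensionality; intros; ring.
  - simpl. replace (fun v : nat -> R => (sum_f_R0 (fun i => u i * v i) n + u (S n) * v (S n)) * peval d p v)
      with (fun v => sum_f_R0 (fun i => u i * v i) n * peval d p v + u (S n) * (v (S n) * peval d p v)).
    rewrite Sadd. rewrite IHn by lia. rewrite S_scal, (S_vi_Y_zero d k) by (auto; lia). ring.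
    apply nice_mult. apply nice_dot; lia. apply nice_peval.
    apply nice_scal, nice_mult. apply nice_coord; lia. apply nice_peval.
    apply functional_extensionality; intros; ring.
Qed.

Theorem theorem3 (d k : nat) (p : mpoly)
  (hd : (1 <= d)%nat) (hk : (3 <= k)%nat) (hodd : Nat.odd k = true)
  (hhom : homogeneous d k p) (hharm : harmonic d p)
  (u : nat -> R) (hu : dot d u u = 1) :
  sphere_int d (fun v => Kinf (dot d u v) * peval d p v) = 0.
Proof.
  set (Ef := fun v => (Kinf (dot d u v) + (- / 4) * dot d u v) * peval d p v).
  assert (nEf : nice d Ef).
  { unfold Ef. apply nice_mult. apply nice_plus.
    apply (nice_comp d Kinf (fun v => dot d u v)). apply Kinf_cont. apply nice_dot; lia.
    apply nice_scal. apply nice_dot; lia. apply nice_peval. }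
  assert (nL : nice d (fun v => dot d u v * peval d p v)).
  { apply nice_mult. apply nice_dot; lia. apply nice_peval. }
  replace (fun v => Kinf (dot d u v) * peval d p v) with
     (fun v => / 4 * (dot d u v * peval d p v) + Ef v).
  2:{ apply functional_extensionality; intros v. unfold Ef. ring. }
  rewrite Sadd by (auto; apply nice_scal; auto).
  rewrite S_scal. unfold dot at 1. rewrite (S_lin d k p u hd hk hhom hharm d (le_n d)).
  assert (HE : sphere_int d Ef = 0).
  { assert (H := Sneg d Ef nEf).
    replace (fun v => Ef (fun i => - v i)) with (fun v => -1 * Ef v) in H.
    rewrite S_scal in H. lra.
    apply functional_extensionality; intros v. unfold Ef.
    rewrite dot_neg, (peval_neg d k p hhom hodd). unfold Kinf. rewrite acos_opp.
    pose proof PI_RGT_0. field. lra. }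
  rewrite HE. ring.
Qed.
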